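(* Let $T:\mathcal{M}_2\to\mathcal{M}_2$ be a random Pauli channel $T(\rho)=p_1\sigma_1\rho\sigma_1+p_2\sigma_2\rho\sigma_2+p_3\sigma_3\rho\sigma_3+(1-p_1-p_2-p_3)\rho$ and define $p=2\min\{p_1p_2+p_1p_3,\,p_2p_1+p_2p_3,\,p_3p_1+p_3p_2\}$. Then for every density matrix $\rho\in\mathcal{M}_2$, $$S(T(\rho))-S(\rho)\geq p(\log 2-S(\rho)).$$
   Context: $(p_1,p_2,p_3,1-p_1-p_2-p_3)$ is a probability distribution, $\sigma_i$ are the Pauli matrices, and $S(\rho)=-\text{tr}(\rho\log\rho)$. *)

(* Defs.v *)
From HB Require Import structures.
From mathcomp Require Import all_boot all_order all_algebra.
From mathcomp Require Import complex.
From mathcomp Require Import reals exp.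
Set Implicit Arguments. Unset Strict Implicit. Unset Printing Implicit Defensive.
Import Order.TTheory GRing.Theory Num.Theory.
Local Open Scope ring_scope.

Section Qubit.
Variable R : realType.
Local Notation C := R[i].

Definition cplx (a b : R) : C := Complex a b.

Definition sigma1 : 'M[C]_2 :=
  \matrix_(i < 2, j < 2) (if i == j then 0 else 1).
Definition sigma2 : 'M[C]_2 :=
  \matrix_(i < 2, j < 2)
    (if i == j then 0 else if (i == 0 :> nat) then cplx 0 (-1) else cplx 0 1).
Definition sigma3 : 'M[C]_2 :=
  \matrix_(i < 2, j < 2)
    (if i == j then (if (i == 0 :> nat) then 1 else -1) else 0).

Definition adjoint (m n : nat) (A : 'M[C]_(m, n)) : 'M[C]_(n, m) :=
  map_mx (@conjc R) A^T.

Definition density (rho : 'M[C]_2) : Prop :=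
  [/\ adjoint rho = rho,
      forall v : 'cV[C]_2, 0 <= (adjoint v *m rho *m v) 0 0
    & \tr rho = 1].

Definition pauli_channel (p1 p2 p3 : R) (rho : 'M[C]_2) : 'M[C]_2 :=
  (p1%:C)%C *: (sigma1 *m rho *m sigma1)
  + (p2%:C)%C *: (sigma2 *m rho *m sigma2)
  + (p3%:C)%C *: (sigma3 *m rho *m sigma3)
  + ((1 - p1 - p2 - p3)%:C)%C *: rho.

Definition spectrum2 (A : 'M[C]_2) (l1 l2 : R) : Prop :=
  char_poly A = ('X - ((l1%:C)%C)%:P) * ('X - ((l2%:C)%C)%:P).

(* von Neumann entropy  S = -tr(rho log rho) = - sum_k l_k log l_k,
   computed from the eigenvalues l1 l2 (natural log; 0 log 0 = 0) *)
Definition vn_entropy2 (l1 l2 : R) : R :=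
  - (l1 * ln l1 + l2 * ln l2).

End Qubit.

(* Main.v *)
Require Import Defs.
From HB Require Import structures.
From mathcomp Require Import all_boot all_order all_algebra.
From mathcomp Require Import complex.
From mathcomp Require Import reals exp.
From mathcomp Require Import ring lra.
Import Order.TTheory GRing.Theory Num.Theory.
Local Open Scope ring_scope.

Section Ana.
Variable R : realType.
Definition gg (u : R) := u * ln u.

Lemma ln_le_sub1 (y : R) : 0 < y -> ln y <= y - 1.
Proof.
move=> y0; have := @le_ln1Dx R (y - 1).
have -> : 1 + (y - 1) = y by ring.
apply; lra.
Qed.

Lemma tangent (x m : R) : 0 <= x -> 0 < m -> gg m + (ln m + 1) * (x - m) <= gg x.
Proof.
rewrite /gg => x0 m0.
have [->|xp] := eqVneq x 0.
  rewrite (@ln0 _ 0) // mulr0; nra.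
have xp' : 0 < x by rewrite lt_def xp x0.
have h := @ln_le_sub1 (m / x) (divr_gt0 m0 xp').
rewrite ln_div ?posrE // in h.
have e : x * (m / x - 1) = m - x by field.
have : x * (ln m - ln x) <= x * (m / x - 1) by rewrite ler_pM2l.
rewrite e; nra.
Qed.

Lemma gconv (x y k : R) : 0 <= x -> 0 <= y -> 0 <= k <= 1 ->
  gg (k * x + (1 - k) * y) <= k * gg x + (1 - k) * gg y.
Proof.
move=> x0 y0 /andP[k0 k1].
set M := k * x + (1 - k) * y.
have M0 : 0 <= M by rewrite /M; nra.
have [Me|Mp] := eqVneq M 0.
  have kx0 : 0 <= k * x by apply: mulr_ge0.
  have ky0 : 0 <= (1 - k) * y by apply: mulr_ge0; lra.
  have kx : k * x = 0 by move: Me; rewrite /M; lra.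
  have ky : (1 - k) * y = 0 by move: Me; rewrite /M; lra.
  rewrite Me /gg mul0r !mulrA kx ky !mul0r; lra.
have Mp' : 0 < M by rewrite lt_def Mp M0.
have t1 := @tangent x M x0 Mp'; have t2 := @tangent y M y0 Mp'.
have e : k * (gg M + (ln M + 1) * (x - M)) + (1 - k) * (gg M + (ln M + 1) * (y - M)) = gg M.
  rewrite /M; ring.
rewrite -[X in X <= _]e; apply: lerD; apply: ler_wpM2l => //; lra.
Qed.

Lemma mono (A m : R) : 0 <= A <= 1 -> (2 * m - 1) ^+ 2 <= (2 * A - 1) ^+ 2 ->
  gg m + gg (1 - m) <= gg A + gg (1 - A).
Proof.
move=> /andP[A0 A1] hd.
have [d0|dn] := eqVneq (2 * A - 1) 0.
  rewrite d0 expr0n /= in hd.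
  have : (2 * m - 1) ^+ 2 == 0 by rewrite eq_le hd sqr_ge0.
  rewrite sqrf_eq0 => /eqP hm.
  have -> : m = A by lra.
  by [].
set d := 2 * A - 1 in hd dn *.
set r := (2 * m - 1) / d.
have r2 : r ^+ 2 <= 1.
  rewrite /r expr_div_n ler_pdivrMr ?mul1r //.
  by rewrite lt_def sqr_ge0 andbT sqrf_eq0.
have rl : -1 <= r <= 1 by apply/andP; split; nra.
set k := (1 + r) / 2.
have ek : m = k * A + (1 - k) * (1 - A).
  rewrite /k /r /d; field; by [].
have ek' : 1 - m = k * (1 - A) + (1 - k) * A by rewrite ek; ring.
have k01 : 0 <= k <= 1 by rewrite /k; apply/andP; split; lra.
have h1 := @gconv A (1 - A) k A0 ltac:(lra) k01.
have h2 := @gconv (1 - A) A k ltac:(lra) A0 k01.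
rewrite ek' ek; lra.
Qed.

Lemma key (l1 l2 m1 m2 t : R) : 0 <= t <= 1 -> l1 + l2 = 1 -> m1 + m2 = 1 ->
  0 <= l1 * l2 -> (m1 - m2) ^+ 2 <= t ^+ 2 * (l1 - l2) ^+ 2 ->
  vn_entropy2 m1 m2 - vn_entropy2 l1 l2 >= (1 - t) * (ln 2 - vn_entropy2 l1 l2).
Proof.
move=> /andP[t0 t1] hl hm hp hd.
have l10 : 0 <= l1 by nra.
have l20 : 0 <= l2 by nra.
set A := t * l1 + (1 - t) / 2; set B := t * l2 + (1 - t) / 2.
have A0 : 0 <= A by rewrite /A; nra.
have B0 : 0 <= B by rewrite /B; nra.
have hA : gg A <= t * gg l1 + (1 - t) * gg (2^-1).
  by apply: gconv => //; [rewrite invr_ge0 ler0n|rewrite t0 t1].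
have hB : gg B <= t * gg l2 + (1 - t) * gg (2^-1).
  by apply: gconv => //; [rewrite invr_ge0 ler0n|rewrite t0 t1].
have g2 : gg (2^-1) = - (ln 2) / 2.
  by rewrite /gg lnV ?posrE // mulrC.
have hmono : gg m1 + gg m2 <= gg A + gg B.
  have htl : t * l1 + t * l2 = t by rewrite -mulrDr hl mulr1.
  have tl2 : 0 <= t * l2 by apply: mulr_ge0.
  have eB : B = 1 - A by rewrite /A /B; lra.
  have em : m2 = 1 - m1 by lra.
  rewrite eB em; apply: mono; first by rewrite A0 /=; lra.
  have -> : 2 * A - 1 = t * (l1 - l2) by rewrite /A mulrBr; lra.
  have -> : 2 * m1 - 1 = m1 - m2 by lra.
  by rewrite exprMn.
rewrite /vn_entropy2; move: hmono hA hB; rewrite g2 /gg; lra.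
Qed.
End Ana.
Section M.
Variable R : realType.
Local Notation C := R[i].

Lemma sum2 (V : nmodType) (F : 'I_2 -> V) : \sum_i F i = F 0 + F 1.
Proof. by rewrite !big_ord_recl big_ord0 addr0; congr (_ + F _); apply/val_inj. Qed.

Lemma det22 (A : 'M[C]_2) : \det A = A 0 0 * A 1 1 - A 0 1 * A 1 0.
Proof.
rewrite (expand_det_row _ 0) sum2 /cofactor !det_mx11 !mxE /=.
have -> : lift 0 (0 : 'I_1) = 1 :> 'I_2 by apply/val_inj.
have -> : lift 1 (0 : 'I_1) = 0 :> 'I_2 by apply/val_inj.
rewrite expr0 expr1; ring.
Qed.

Lemma tr22 (A : 'M[C]_2) : \tr A = A 0 0 + A 1 1.
Proof. by rewrite /mxtrace sum2. Qed.

Lemma spec_trdet (A : 'M[C]_2) l1 l2 : spectrum2 A l1 l2 ->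
  \tr A = (l1 + l2)%:C%C /\ \det A = (l1 * l2)%:C%C.
Proof.
rewrite /spectrum2 => H.
have h1 := char_poly_trace A (isT : 0 < 2)%N.
have h0 := char_poly_det A.
rewrite H /= in h1 h0.
rewrite !(coefE, mulrBl, mulrBr) /= in h1 h0.
rewrite rmorphD rmorphM; split.
  by apply: oppr_inj; rewrite -h1; ring.
by move: h0; rewrite sqrrN expr1n mul1r => <-; ring.
Qed.

Lemma cmul (a b c d : R) : (Complex a b : C) * Complex c d = Complex (a*c - b*d) (a*d + b*c).
Proof. by []. Qed.
Lemma cadd (a b c d : R) : (Complex a b : C) + Complex c d = Complex (a + c) (b + d).
Proof. by []. Qed.
Lemma copp (a b : R) : - (Complex a b : C) = Complex (- a) (- b).
Proof. by []. Qed.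
Lemma cconj (a b : R) : conjc (Complex a b : C) = Complex a (- b).
Proof. by []. Qed.
Lemma c0 : (0 : C) = Complex 0 0. Proof. by []. Qed.
Lemma c1 : (1 : C) = Complex 1 0. Proof. by []. Qed.
Lemma creal (r : R) : (r%:C)%C = Complex r 0 :> C. Proof. by []. Qed.
Lemma ccplx (a b : R) : cplx a b = Complex a b :> C. Proof. by []. Qed.
Lemma cle (a b : R) : ((0 : C) <= Complex a b) = (b == 0) && (0 <= a).
Proof. by rewrite lecE /= eq_sym. Qed.

Lemma mainM (p1 p2 p3 : R) (rho : 'M[R[i]]_2) (l1 l2 m1 m2 : R) :
  density rho ->
  spectrum2 rho l1 l2 ->
  spectrum2 (pauli_channel p1 p2 p3 rho) m1 m2 ->
  [/\ l1 + l2 = 1, m1 + m2 = 1, 0 <= l1 * l2 &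
   exists x y z : R, (l1 - l2) ^+ 2 = x ^+ 2 + y ^+ 2 + z ^+ 2 /\
     (m1 - m2) ^+ 2 = (1 - 2 * (p1 + p2)) ^+ 2 * x ^+ 2
        + (1 - 2 * (p2 + p3)) ^+ 2 * y ^+ 2 + (1 - 2 * (p1 + p3)) ^+ 2 * z ^+ 2].
Proof.
move=> [Hadj Hpsd Htr] Hsl Hsm.
have [trl detl] := spec_trdet _ _ _ Hsl; have [trm detm] := spec_trdet _ _ _ Hsm.
have hh i j : conjc (rho j i) = rho i j.
  by have := congr1 (fun M : 'M_2 => M i j) Hadj; rewrite /adjoint !mxE.
have h01 := hh 0 1; have h00 := hh 0 0; have h11 := hh 1 1.
rewrite tr22 in Htr; rewrite tr22 in trl; rewrite tr22 in trm.
rewrite det22 in detl; rewrite det22 in detm.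
rewrite /pauli_channel /sigma1 /sigma2 /sigma3 !(mxE, sum2) /= in trm.
rewrite /pauli_channel /sigma1 /sigma2 /sigma3 !(mxE, sum2) /= in detm.
have v1 := Hpsd (\col_i (if i == 0 then - rho 0 1 else rho 0 0)).
have v2 := Hpsd (\col_i (if i == 0 then rho 1 1 else - rho 1 0)).
rewrite /adjoint !(mxE, sum2) /= in v1 v2.
rewrite !(mul0r, mulr0, mul1r, mulr1, add0r, addr0, mulN1r, mulrN1) in trm detm.
move: h01 h00 h11 Htr trl detl trm detm v1 v2.
case: (rho 0 0) => a1 a2; case: (rho 0 1) => b1 b2; case: (rho 1 0) => c1 c2; case: (rho 1 1) => d1 d2.
rewrite !creal !ccplx !cmul !cconj !copp !cadd !cle.
move=> [hb1 hb2] [ha2] [hd2] [htr _] [htl _] [hdl1 hdl2] [htm _] [hdm _] /andP[v1i v1r] /andP[v2i v2r].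
have a20 : a2 = 0 by lra.
have d20 : d2 = 0 by lra.
have ec1 : c1 = b1 by [].
have eb2 : b2 = - c2 by lra.
subst a2 d2 c1 b2.
have ed1 : d1 = 1 - a1 by lra.
subst d1.
set D := a1 * (1 - a1) - (b1 ^+ 2 + c2 ^+ 2).
have eD : l1 * l2 = D by rewrite -hdl1 /D; ring.
have v1D : 0 <= a1 * D by move: v1r; rewrite /D; nra.
have v2D : 0 <= (1 - a1) * D by move: v2r; rewrite /D; nra.
have hl : l1 + l2 = 1 by lra.
have hm : m1 + m2 = 1 by move: htm; nra.
split => //; first by rewrite eD; nra.
exists (2 * a1 - 1), (2 * b1), (2 * c2); split.
  have -> : (l1 - l2) ^+ 2 = (l1 + l2) ^+ 2 - 4 * (l1 * l2) by ring.
  by rewrite hl eD /D; ring.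
have -> : (m1 - m2) ^+ 2 = (m1 + m2) ^+ 2 - 4 * (m1 * m2) by ring.
rewrite hm -hdm; ring.
Qed.
End M.

Lemma lam (R : realType) (q1 q2 q3 P : R) : 0 <= q1 -> 0 <= q2 -> 0 <= q3 ->
  q1 + q2 + q3 <= 1 -> 0 <= P -> P <= q1 * (q2 + q3) ->
  (1 - 2 * (q2 + q3)) ^+ 2 <= (1 - 2 * P) ^+ 2.
Proof.
move=> h1 h2 h3 hs hP hP1.
have hq : 0 <= q2 + q3 by exact: addr_ge0.
have a1 : q1 * (q2 + q3) <= 1 * (q2 + q3) by apply: ler_wpM2r => //; lra.
have a2 : (1 + q1) * (q2 + q3) <= (1 + q1) * (1 - q1) by apply: ler_wpM2l => //; lra.
have a3 : 0 <= q1 * q1 by exact: mulr_ge0.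
have e1 : 0 <= (1 - 2 * P) - (1 - 2 * (q2 + q3)) by lra.
have e2 : 0 <= (1 - 2 * P) + (1 - 2 * (q2 + q3)).
  have : (1 + q1) * (q2 + q3) = q2 + q3 + q1 * (q2 + q3) by ring.
  have : (1 + q1) * (1 - q1) = 1 - q1 * q1 by ring.
  lra.
rewrite -subr_ge0.
have -> : (1 - 2 * P) ^+ 2 - (1 - 2 * (q2 + q3)) ^+ 2 =
  ((1 - 2 * P) - (1 - 2 * (q2 + q3))) * ((1 - 2 * P) + (1 - 2 * (q2 + q3))) by ring.
exact: mulr_ge0.
Qed.

Theorem mainTheorem18 (R : realType) (p1 p2 p3 : R) (rho : 'M[R[i]]_2)
    (l1 l2 m1 m2 : R) :
  0 <= p1 -> 0 <= p2 -> 0 <= p3 -> p1 + p2 + p3 <= 1 ->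
  density rho ->
  spectrum2 rho l1 l2 ->
  spectrum2 (pauli_channel p1 p2 p3 rho) m1 m2 ->
  let p := 2 * Num.min (p1 * p2 + p1 * p3)
                 (Num.min (p2 * p1 + p2 * p3) (p3 * p1 + p3 * p2)) in
  vn_entropy2 m1 m2 - vn_entropy2 l1 l2 >= p * (ln 2 - vn_entropy2 l1 l2).
Proof.
move=> h1 h2 h3 hs Hd Hl Hm; cbv zeta.
have [hl hm hp [x [y [z [ex ey]]]]] := @mainM R p1 p2 p3 rho l1 l2 m1 m2 Hd Hl Hm.
set P := Num.min (p1 * p2 + p1 * p3) (Num.min (p2 * p1 + p2 * p3) (p3 * p1 + p3 * p2)).
have P1 : P <= p1 * (p2 + p3) by rewrite /P mulrDr ge_min lexx.
have P2 : P <= p2 * (p1 + p3) by rewrite /P mulrDr !ge_min lexx orbT.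
have P3 : P <= p3 * (p1 + p2) by rewrite /P mulrDr !ge_min lexx !orbT.
have P0 : 0 <= P.
  rewrite /P !le_min; apply/and3P; split; rewrite -mulrDr; apply: mulr_ge0 => //; exact: addr_ge0.
have L1 := @lam R p1 p2 p3 P h1 h2 h3 hs P0 P1.
have L2 : (1 - 2 * (p1 + p3)) ^+ 2 <= (1 - 2 * P) ^+ 2.
  by apply: (@lam R p2 p1 p3 P h2 h1 h3) => //; lra.
have L3 : (1 - 2 * (p1 + p2)) ^+ 2 <= (1 - 2 * P) ^+ 2.
  by apply: (@lam R p3 p1 p2 P h3 h1 h2) => //; lra.
have := @key R l1 l2 m1 m2 (1 - 2 * P).
have -> : 1 - (1 - 2 * P) = 2 * P by ring.
apply => //.
  have q : p1 * (p2 + p3) <= p1 * (1 - p1) by apply: ler_wpM2l => //; lra.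
  have q' : p1 * (1 - p1) <= 1 / 4 by have := sqr_ge0 (p1 - 1/2); lra.
  apply/andP; split; lra.
rewrite ex ey.
have k1 := ler_wpM2r (sqr_ge0 x) L3.
have k2 := ler_wpM2r (sqr_ge0 y) L1.
have k3 := ler_wpM2r (sqr_ge0 z) L2.
have -> : (1 - 2 * P) ^+ 2 * (x ^+ 2 + y ^+ 2 + z ^+ 2) =
  (1 - 2 * P) ^+ 2 * x ^+ 2 + (1 - 2 * P) ^+ 2 * y ^+ 2 + (1 - 2 * P) ^+ 2 * z ^+ 2 by ring.
lra.
Qed.
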